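(* Let $\Omega$ be a finite set, $(H_i\mid i\in\Omega)$ finite abelian groups, $h_i=|H_i|$, $\mathbf{H}=\prod_{i\in\Omega}H_i$, and $\mathbf{P}=(\Omega,\preccurlyeq_{\mathbf{P}})$ a poset. Let $\alpha\in\hat{\mathbf{H}}$ with $\langle\mathrm{supp}(\alpha)\rangle_{\overline{\mathbf{P}}}=D$. Then $$F(\alpha)=\sum_{I\in\mathcal{I}(\mathbf{P}),\ I\subseteq(\Omega-D)\cup\min_{\mathbf{P}}(D)}(-1)^{|I\cap D|}\Big(\prod_{i\in I-\max_{\mathbf{P}}(I)}h_i\Big)\Big(\prod_{i\in\max_{\mathbf{P}}(I)-\min_{\mathbf{P}}(D)}(h_i-1)\Big)x^{|I|}.$$
   Context: $\hat{\mathbf{H}}$ is the character group of $\mathbf{H}$, identified with $\prod_i\hat{H_i}$ via $\alpha(\beta)=\prod_i\alpha_{(i)}(\beta_{(i)})$; $\mathrm{supp}$ of a codeword is the set of coordinates where it is not the identity. $\mathcal{I}(\mathbf{P})$ is the set of ideals (down-closed subsets) of $\mathbf{P}$; $\max_{\mathbf{P}}(B)$, $\min_{\mathbf{P}}(B)$ are the sets of maximal, minimal elements of $B$ w.r.t. $\preccurlyeq_{\mathbf{P}}$. For a poset $\mathbf{Q}$ on $\Omega$, $\langle B\rangle_{\mathbf{Q}}$ is the down-closure of $B$ in $\mathbf{Q}$, $\mathrm{wt}_{\mathbf{Q}}(\beta)=|\langle\mathrm{supp}(\beta)\rangle_{\mathbf{Q}}|$. $\overline{\mathbf{P}}$ is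 the dual poset. With $n=|\Omega|$, $F(\alpha)=\sum_{l=0}^{n}\big(\sum_{\beta\in\mathbf{H},\ \mathrm{wt}_{\mathbf{P}}(\beta)=l}\alpha(\beta)\big)x^l$. *)

(* Defs.v *)
From HB Require Import structures.
From mathcomp Require Import all_boot all_order all_algebra all_field.
Set Implicit Arguments. Unset Strict Implicit. Unset Printing Implicit Defensive.
Import Order.Theory GRing.Theory Num.Theory.
Local Open Scope ring_scope.
Local Open Scope order_scope.

Definition is_character (G : finZmodType) (f : G -> algC) : Prop :=
  f 0%R = 1%R /\ forall x y : G, f (x + y)%R = (f x * f y)%R.

Section PosetDefs.
Context {d : Order.disp_t} {T : finPOrderType d}.

Definition down_closure (B : {set T}) : {set T} :=
  [set j | [exists i in B, j <= i]].
(* down-closure in the dual poset = up-closure in P *)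
Definition dual_closure (B : {set T}) : {set T} :=
  [set j | [exists i in B, i <= j]].
Definition is_ideal (I : {set T}) : bool :=
  [forall i in I, forall j, (j <= i) ==> (j \in I)].
Definition maxP (B : {set T}) : {set T} :=
  [set i in B | [forall j in B, (i <= j) ==> (j == i)]].
Definition minP (B : {set T}) : {set T} :=
  [set i in B | [forall j in B, (j <= i) ==> (j == i)]].
End PosetDefs.

Section Codes.
Context {d : Order.disp_t} {T : finPOrderType d} (H : T -> finZmodType).

Definition supp_word (beta : {dffun forall i, H i}) : {set T} :=
  [set i | beta i != 0%R].
Definition wtP (beta : {dffun forall i, H i}) : nat :=
  #|down_closure (supp_word beta)|.
Definition supp_char (alpha : forall i, H i -> algC) : {set T} :=
  [set i | [exists x : H i, alpha i x != 1%R]].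
Definition char_eval (alpha : forall i, H i -> algC) (beta : {dffun forall i, H i}) : algC :=
  (\prod_i alpha i (beta i))%R.
Definition Fpoly (alpha : forall i, H i -> algC) : {poly algC} :=
  (\sum_(l < #|T|.+1)
     (\sum_(beta : {dffun forall i, H i} | wtP beta == l) char_eval alpha beta) *: 'X^l)%R.
End Codes.

(* Main.v *)
Require Import Defs.
From HB Require Import structures.
From mathcomp Require Import all_boot all_order all_algebra all_field.
Import Order.Theory GRing.Theory Num.Theory.
Set Implicit Arguments. Unset Strict Implicit. Unset Printing Implicit Defensive.

Section Helpers.
Local Open Scope order_scope.
Context {d : Order.disp_t} {T : finPOrderType d}.

Lemma exists_max (I : {set T}) j : j \in I -> exists2 m, m \in maxP I & j <= m.
Proof.
move=> jI.
suff: forall n k, k \in I -> (#|[set l in I | (k < l)%O]| <= n)%N -> exists2 m, m \in maxP I & k <= m.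
  by move/(_ _ j jI (leqnn _)) => [m mI jm]; exists m => //; apply: le_trans jm.
elim=> [|n IH] k kI hn.
  exists k => //; rewrite inE kI /=; apply/forallP => l; apply/implyP => lI; apply/implyP => kl.
  apply/negPn/negP => lk.
  have : l \in [set l in I | k < l] by rewrite inE lI lt_def lk kl.
  by move: hn; rewrite leqn0 cards_eq0 => /eqP ->; rewrite inE.
case km: (k \in maxP I); first by exists k.
move: km; rewrite inE kI /= => /negbT; rewrite negb_forall => /existsP [l].
rewrite negb_imply => /andP [lI]; rewrite negb_imply => /andP [kl lk].
have hl : (#|[set l' in I | (l < l')%O]| <= n)%N.
  rewrite -ltnS; apply: leq_trans hn; apply: proper_card; apply/properP; split.
    apply/subsetP => x; rewrite !inE => /andP [-> /= lx]; apply: le_lt_trans kl lx.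
  by exists l; rewrite !inE ?ltxx ?andbF // lI lt_def lk kl.
have [m mM lm] := IH l lI hl.
by exists m => //; apply: le_trans lm.
Qed.

Lemma dc_ideal (B : {set T}) : is_ideal (down_closure B).
Proof.
apply/forallP => i; apply/implyP; rewrite inE => /existsP [k /andP [kB ik]].
apply/forallP => j; apply/implyP => ji; rewrite inE; apply/existsP; exists k.
by rewrite kB (le_trans ji ik).
Qed.

Lemma dc_eq (I B : {set T}) : is_ideal I ->
  (down_closure B == I) = (B \subset I) && (maxP I \subset B).
Proof.
move=> hI; apply/idP/idP.
  move/eqP <-; apply/andP; split; apply/subsetP => i.
    by move=> iB; rewrite inE; apply/existsP; exists i; rewrite iB lexx.
  rewrite inE => /andP [] ; rewrite inE => /existsP [k /andP [kB ik]] /forallP /(_ k).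
  have -> : k \in down_closure B by rewrite inE; apply/existsP; exists k; rewrite kB lexx.
  by rewrite /= ik /= => /eqP <-.
move=> /andP [sB mB]; apply/eqP/setP => j; rewrite inE; apply/existsP/idP.
  move=> [k /andP [kB jk]]; have kI := subsetP sB _ kB.
  by move: hI => /forallP /(_ k); rewrite kI /= => /forallP /(_ j); rewrite jk.
move=> jI; have [m mM jm] := exists_max jI.
by exists m; rewrite (subsetP mB _ mM) jm.
Qed.

End Helpers.
Section Helpers2.
Local Open Scope ring_scope.

Lemma char_sum (G : finZmodType) (f : G -> algC) : is_character f ->
  \sum_(x : G) f x = if [exists x, f x != 1] then 0 else #|G|%:R.
Proof.
move=> [f0 fD]; case: ifP.
  move=> /existsP [x0 hx0].
  have E : \sum_(x : G) f x = f x0 * \sum_(x : G) f x.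
    rewrite {1}(reindex_inj (addrI x0)) /= mulr_sumr; apply: eq_bigr => x _.
    by rewrite fD.
  apply/eqP; move: E => /eqP; rewrite -subr_eq0 -{1}[\sum_x f x]mul1r -mulrBl mulf_eq0.
  by rewrite subr_eq0 eq_sym (negbTE hx0).
move=> /negbT; rewrite negb_exists => /forallP h.
rewrite (eq_bigr (fun _ => 1)); last by move=> x _; move: (h x); rewrite negbK => /eqP.
by rewrite sumr_const.
Qed.

Lemma sum_dffun_prod (I : finType) (T_ : I -> finType) (R : comNzRingType)
  (G : forall i, T_ i -> R) :
  \sum_(f : {dffun forall i, T_ i}) \prod_i G i (f i) = \prod_i \sum_(x : T_ i) G i x.
Proof.
rewrite (reindex (@dffun_of_fprod I T_)); last exact: onW_bij (dffun_of_fprod_bij T_).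
pose P i := [ffun x => G i x].
transitivity (\sum_(t : fprod T_) \prod_(i in I) P i (t i)).
  by apply: eq_bigr => t _; apply: eq_bigr => i _; rewrite !ffunE.
rewrite big_fprod.
transitivity (\prod_i \sum_(j in tagged_with T_ i) untag 0 (P i) j).
  by rewrite bigA_distr_big_dep.
apply: eq_bigr => i _.
transitivity (\sum_(x : T_ i) P i x).
  by rewrite (big_tag (fun i x => P i x)).
by apply: eq_bigr => x _; rewrite ffunE.
Qed.

End Helpers2.
Section Helpers3.
Local Open Scope ring_scope.
Context {d : Order.disp_t} {T : finPOrderType d}.

Lemma ideal_down (I : {set T}) i j : is_ideal I -> i \in I -> (j <= i)%O -> j \in I.
Proof. by move=> /forallP /(_ i) + iI; rewrite iI => /forallP /(_ j) /implyP. Qed.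

Lemma comb (S I : {set T}) (h : T -> algC) : is_ideal I ->
  \prod_i (if i \in maxP I then (if i \in S then 0 else h i) - 1
           else if i \in I then (if i \in S then 0 else h i) else 1)
  = if I \subset ~: dual_closure S :|: minP (dual_closure S) then
      (-1) ^+ #|I :&: dual_closure S| * \prod_(i in I :\: maxP I) h i
      * \prod_(i in maxP I :\: minP (dual_closure S)) (h i - 1)
    else 0.
Proof.
move=> hI; set Dc := dual_closure S.
have SD i : i \in S -> i \in Dc by move=> iS; rewrite inE; apply/existsP; exists i; rewrite iS lexx.
have minD i : i \in minP Dc -> i \in Dc by rewrite inE => /andP [].
have minS i : i \in minP Dc -> i \in S.
  rewrite inE => /andP [] ; rewrite inE => /existsP [s /andP [sS si]] /forallP /(_ s).
  by rewrite (SD _ sS) si /= => /eqP <-.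
have MI i : i \in maxP I -> i \in I by rewrite inE => /andP [].
case: ifP => cond.
  have F1 i : i \in I -> i \in Dc -> i \in minP Dc.
    move=> iI iD; move: (subsetP cond i iI); rewrite in_setU in_setC iD /= => //.
  have F2 i : i \in I -> i \in Dc -> i \in maxP I.
    move=> iI iD; rewrite inE iI /=; apply/forallP => j; apply/implyP => jI; apply/implyP => ij.
    have jD : j \in Dc.
      move: iD; rewrite !inE => /existsP [s /andP [sS si]]; apply/existsP; exists s.
      by rewrite sS (le_trans si ij).
    have := F1 j jI jD; rewrite inE => /andP [_] /forallP /(_ i); rewrite iD ij /=.
    by move=> /eqP ->.
  rewrite -prodr_const !(big_mkcond (fun i => i \in _)) -!big_split /=.
  apply: eq_bigr => i _; rewrite !in_setD !in_setI.
  case iM: (i \in maxP I).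
    have iI := MI _ iM; rewrite iI /=.
    case iD: (i \in Dc).
      have imin := F1 _ iI iD; rewrite imin (minS _ imin) /=.
      by rewrite sub0r !mulr1.
    have -> : (i \in minP Dc) = false by apply/negbTE; apply: contraFN iD; apply: minD.
    have -> : (i \in S) = false by apply/negbTE; apply: contraFN iD; apply: SD.
    by rewrite !mul1r.
  case iI: (i \in I) => /=; last by rewrite andbF !mulr1.
  have iD : (i \in Dc) = false by apply/negbTE; apply: contraFN iM; apply: F2.
  have -> : (i \in S) = false by apply/negbTE; apply: contraFN iD; apply: SD.
  by rewrite iD andbF mul1r mulr1.
move/negbT: cond => /subsetPn [i iI]; rewrite in_setU in_setC negb_or negbK.
move=> /andP [iD imin].
move: imin; rewrite inE iD /= negb_forall => /existsP [k].
rewrite negb_imply => /andP [kD]; rewrite negb_imply => /andP [ki nki].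
move: kD; rewrite inE => /existsP [s /andP [sS sk]].
have si := le_trans sk ki.
have sI := ideal_down hI iI si.
have sM : (s \in maxP I) = false.
  apply/negbTE/negP; rewrite inE sI /= => /forallP /(_ i); rewrite iI si /= => /eqP eis.
  suff ki2 : k == i by rewrite ki2 in nki.
  by apply/eqP/le_anti; rewrite ki eis sk.
by rewrite (bigD1 s) //= sM sI sS mul0r.
Qed.

End Helpers3.

Unset Implicit Arguments.
Set Strict Implicit.

Theorem theorem2p1 (d : Order.disp_t) (Omega : finPOrderType d)
  (H : Omega -> finZmodType) (alpha : forall i, H i -> algC)
  (halpha : forall i, is_character (alpha i)) (D : {set Omega})
  (hD : dual_closure (supp_char alpha) = D) :
  Fpoly alpha =
  (\sum_(I : {set Omega} | is_ideal I && (I \subset (~: D) :|: minP D))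
     ((-1) ^+ #|I :&: D|
      * (\prod_(i in I :\: maxP I) (#|H i|%:R : algC))
      * (\prod_(i in maxP I :\: minP D) ((#|H i|%:R : algC) - 1)))
     *: 'X^#|I|)%R.
Proof.
subst D.
set c := char_eval alpha.
have A : Fpoly alpha = (\sum_(b : {dffun forall i, H i}) c b *: 'X^(wtP b))%R.
  rewrite /Fpoly (partition_big (fun b => inord (wtP b) : 'I_#|Omega|.+1) predT) //=.
  apply: eq_bigr => l _; rewrite scaler_suml; apply: eq_big => b.
    have hb : (wtP b <= #|Omega|)%N by apply: max_card.
    by rewrite -val_eqE /= inordK.
  by move=> /eqP ->.
have B : (\sum_(b : {dffun forall i, H i}) c b *: 'X^(wtP b))%R =
   (\sum_(I : {set Omega}) (\sum_(b | down_closure (supp_word b) == I) c b) *: 'X^#|I|)%R.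
  rewrite (partition_big (fun b => down_closure (supp_word b)) predT) //=.
  by apply: eq_bigr => I _; rewrite scaler_suml; apply: eq_bigr => b /eqP <-.
rewrite A B [RHS]big_mkcond; apply: eq_bigr => I _.
case hI: (is_ideal I); last first.
  rewrite /= big_pred0 ?scale0r // => b; apply/negP => /eqP e.
  by move: hI; rewrite -e dc_ideal.
rewrite /=.
pose Q i (x : H i) := if i \in maxP I then x != 0%R else if i \in I then true else x == 0%R.
have E1 : (\sum_(b | down_closure (supp_word b) == I) c b =
   \prod_i \sum_(x : H i) (if Q i x then alpha i x else 0))%R.
  transitivity (\sum_(b : {dffun forall i, H i}) \prod_i (if Q i (b i) then alpha i (b i) else 0))%R; last first.
    exact: (sum_dffun_prod (fun i (x : H i) => if Q i x then alpha i x else 0%R)).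
  rewrite big_mkcond; apply: eq_bigr => b _; rewrite dc_eq //.
  have -> : (supp_word b \subset I) && (maxP I \subset supp_word b) = [forall i, Q i (b i)].
    apply/andP/forallP.
      move=> [sB mB] i; rewrite /Q; case: ifP => im.
        by move: (subsetP mB i im); rewrite inE.
      case: ifP => iI //.
      by move: iI; apply: contraFT => hb; apply: (subsetP sB); rewrite inE.
    move=> hq; split; apply/subsetP => i.
      rewrite inE => hb; apply/negPn/negP => niI; move: (hq i); rewrite /Q.
      have -> : (i \in maxP I) = false by apply/negbTE; apply: contra niI; rewrite inE => /andP[].
      by rewrite (negbTE niI) (negbTE hb).
    by move=> im; move: (hq i); rewrite /Q im inE.
  case: (boolP [forall i, Q i (b i)]) => h.
    by rewrite /c /char_eval; apply: eq_bigr => i _; rewrite (forallP h i).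
  move: h; rewrite negb_forall => /existsP [i hi].
  by rewrite (bigD1 i) //= (negbTE hi) mul0r.
rewrite E1.
have E2 : (\prod_i \sum_(x : H i) (if Q i x then alpha i x else 0) =
  \prod_i (if i \in maxP I then (if i \in supp_char alpha then 0 else #|H i|%:R) - 1
           else if i \in I then (if i \in supp_char alpha then 0 else #|H i|%:R) else 1))%R.
  apply: eq_bigr => i _.
  have hs : (\sum_(x : H i) alpha i x = if i \in supp_char alpha then 0 else #|H i|%:R)%R.
    by rewrite (char_sum (halpha i)) inE.
  rewrite /Q; case: ifP => im.
    rewrite -hs [in RHS](bigD1 0%R) //= (halpha i).1 addrC addrK (bigD1 0%R) //= eqxx add0r.
    by apply: eq_bigr => x ->.
  case: ifP => iI; first by rewrite -hs.
  by rewrite -big_mkcond big_pred1_eq (halpha i).1.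
rewrite E2 comb //.
by case: ifP => _; rewrite ?scale0r.
Qed.
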